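(* A quantum channel $\mathcal P$ on $S$ is activity breaking (i.e. $\mathcal P(\rho)\in\mathsf P(S)$ for every $\rho\in\mathsf{St}(S)$) if and only if there is a POVM $(P_j)_{j=1}^d$ (with $P_j\ge0$, $\sum_jP_j=I$) such that $\mathcal P(\rho)=\sum_{j=1}^d\mathrm{Tr}[P_j\rho]\,\tau_j$ for all $\rho$.
   Context: $S$ is a $d$-dimensional quantum system with non-degenerate Hamiltonian $H=\sum_i E_i|i\rangle\langle i|$, $E_1<\dots<E_d$. $\mathsf{St}(S)$ is the set of density matrices; $\mathsf P(S)$ is the set of passive states, i.e. states $\sum_i p_i|i\rangle\langle i|$ with $p_1\ge\dots\ge p_d$. For $j=1,\dots,d$, $\tau_j=\frac1j\sum_{i=1}^j|i\rangle\langle i|$. *)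

(* Defs.v *)
(* Complex scalars: an arbitrary numClosedFieldType C
   (e.g. C = complex numbers), with conjugation x^* and the usual partial
   order (0 <= z  iff  z is real and nonnegative). *)
From HB Require Import structures.
From mathcomp Require Import all_boot all_order all_algebra.
Set Implicit Arguments. Unset Strict Implicit. Unset Printing Implicit Defensive.
Import Order.TTheory GRing.Theory Num.Theory.
Local Open Scope ring_scope.

Section Quantum.
Variable C : numClosedFieldType.

Definition adjv n (v : 'cV[C]_n) : 'rV[C]_n := (map_mx Num.conj v)^T.

(* positive semidefinite:  <v|A|v> >= 0 for all v  (over C this forces
   Hermiticity) *)
Definition psdmx n (A : 'M[C]_n) : Prop :=
  forall v : 'cV[C]_n, 0 <= (adjv v *m A *m v) 0 0.

Definition density d (rho : 'M[C]_d) : Prop := psdmx rho /\ \tr rho = 1.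

(* Positivity of the n x n block matrix [B k l] (blocks of size d x d),
   i.e. psd of an element of M_n(M_d), written out blockwise:
   for all v = (v_k)_k, sum_{k,l} <v_k| B k l |v_l> >= 0. *)
Definition block_psd n d (B : 'I_n -> 'I_n -> 'M[C]_d) : Prop :=
  forall v : 'I_n -> 'cV[C]_d,
    0 <= \sum_(k < n) \sum_(l < n) (adjv (v k) *m B k l *m v l) 0 0.

(* complete positivity: id_n (x) P is positive for every n *)
Definition completely_positive d (P : 'M[C]_d -> 'M[C]_d) : Prop :=
  forall n (B : 'I_n -> 'I_n -> 'M[C]_d),
    block_psd B -> block_psd (fun k l => P (B k l)).

Definition trace_preserving d (P : 'M[C]_d -> 'M[C]_d) : Prop :=
  forall X, \tr (P X) = \tr X.

Definition quantum_channel d (P : 'M[C]_d -> 'M[C]_d) : Prop :=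
  linear P /\ completely_positive P /\ trace_preserving P.

(* Passive states P(S), relative to the energy eigenbasis |0>,...,|d-1>
   (the standard basis, ordered by increasing energy):
   states diagonal in that basis with nonincreasing populations. *)
Definition passive d (rho : 'M[C]_d) : Prop :=
  density rho /\
  exists p : 'I_d -> C,
    rho = diag_mx (\row_i p i) /\ forall i j : 'I_d, (i <= j)%N -> p j <= p i.

Definition activity_breaking d (P : 'M[C]_d -> 'M[C]_d) : Prop :=
  forall rho, density rho -> passive (P rho).

(* tau_j = (1/j) sum_{i <= j} |i><i| ; with 0-based index j : 'I_d this is
   (1/(j+1)) * projector onto the first j+1 basis vectors *)
Definition tau d (j : 'I_d) : 'M[C]_d :=
  (j.+1%:R)^-1 *: diag_mx (\row_(i < d) (if (i <= j)%N then 1 else 0)).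

Definition povm d (E : 'I_d -> 'M[C]_d) : Prop :=
  (forall j, psdmx (E j)) /\ \sum_(j < d) E j = 1%:M.

End Quantum.
Arguments tau {C d} j.

(* Main.v *)
Require Import Defs.
From HB Require Import structures.
From mathcomp Require Import all_boot all_order all_algebra ring.
From mathcomp Require Import sesquilinear spectral.
Import Order.TTheory GRing.Theory Num.Theory.
Local Open Scope ring_scope.
Set Implicit Arguments. Unset Strict Implicit. Unset Printing Implicit Defensive.

Section H.
Variable C : numClosedFieldType.

Definition bf n (A : 'M[C]_n) (u w : 'cV[C]_n) := (adjv u *m A *m w) 0 0.

Lemma bfE n (A : 'M[C]_n) u w :
  bf A u w = \sum_i \sum_j (u i 0)^* * A i j * w j 0.
Proof.
rewrite /bf /adjv mxE exchange_big /=; apply: eq_bigr => j _.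
by rewrite mxE big_distrl /=; apply: eq_bigr => i _; rewrite !mxE.
Qed.

Lemma bfDl n (A : 'M[C]_n) u u' w : bf A (u + u') w = bf A u w + bf A u' w.
Proof. rewrite !bfE -big_split /=; apply: eq_bigr=> i _; rewrite -big_split; apply: eq_bigr => j _.
by rewrite !mxE rmorphD /= !mulrDl. Qed.
Lemma bfDr n (A : 'M[C]_n) u w w' : bf A u (w + w') = bf A u w + bf A u w'.
Proof. rewrite !bfE -big_split /=; apply: eq_bigr=> i _; rewrite -big_split; apply: eq_bigr => j _.
by rewrite !mxE !mulrDr. Qed.
Lemma bfZl n (A : 'M[C]_n) c u w : bf A (c *: u) w = c^* * bf A u w.
Proof. rewrite !bfE mulr_sumr; apply: eq_bigr=> i _; rewrite mulr_sumr; apply: eq_bigr => j _.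
by rewrite !mxE rmorphM /= !mulrA. Qed.
Lemma bfZr n (A : 'M[C]_n) c u w : bf A u (c *: w) = c * bf A u w.
Proof. rewrite !bfE mulr_sumr; apply: eq_bigr=> i _; rewrite mulr_sumr; apply: eq_bigr => j _.
by rewrite !mxE mulrCA. Qed.
Lemma bf_delta n (A : 'M[C]_n) i j : bf A (delta_mx i 0) (delta_mx j 0) = A i j.
Proof.
rewrite bfE (bigD1 i) //= [X in _ + X]big1 ?addr0; last first.
  move=> k kn; apply: big1 => l _; rewrite !mxE (negbTE kn) /= rmorph0 !mul0r //.
rewrite (bigD1 j) //= [X in _ + X]big1 ?addr0; last first.
  by move=> k kn; rewrite !mxE (negbTE kn) /= !mulr0.
by rewrite !mxE !eqxx /= rmorph1 mul1r mulr1.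
Qed.

Lemma psd_diag n (A : 'M[C]_n) i : psdmx A -> 0 <= A i i.
Proof. by move=> /(_ (delta_mx i 0)); rewrite -/(bf _ _ _) bf_delta. Qed.

Lemma psd_herm n (A : 'M[C]_n) i j : psdmx A -> (A j i)^* = A i j.
Proof.
move=> PA.
have R : forall c : C, (bf A (delta_mx i 0 + c *: delta_mx j 0) (delta_mx i 0 + c *: delta_mx j 0))^* =
   bf A (delta_mx i 0 + c *: delta_mx j 0) (delta_mx i 0 + c *: delta_mx j 0).
  by move=> c; apply/CrealP/ger0_real/PA.
have E : forall c : C, bf A (delta_mx i 0 + c *: delta_mx j 0) (delta_mx i 0 + c *: delta_mx j 0)
   = A i i + c * A i j + c^* * A j i + c^* * c * A j j.
  move=> c; rewrite !(bfDl, bfDr, bfZl, bfZr) !bf_delta.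
  ring.
have Ri : forall k, (A k k)^* = A k k by move=> k; apply/CrealP/ger0_real/psd_diag.
have R1 := R 1; rewrite E !rmorphD !rmorphM /= !rmorph1 !Ri in R1.
have R2 := R 'i; rewrite E !rmorphD !rmorphM /= !conjCK conjCi !Ri in R2.
have h1 : (A i j)^* + (A j i)^* - A i j - A j i = 0.
  move/eqP: R1; rewrite -subr_eq0 => /eqP H; rewrite -H; ring.
have h2 : 'i * ((A j i)^* - (A i j)^* - A i j + A j i) = 0.
  move/eqP: R2; rewrite -subr_eq0 => /eqP H; rewrite -H; ring.
move/eqP: h2; rewrite mulf_eq0 (negbTE (neq0Ci C)) /= => /eqP h2.
apply/eqP; rewrite -subr_eq0; apply/eqP.
have -> : (A j i)^* - A i j = ((A j i)^* - (A i j)^* - A i j + A j i + ((A i j)^* + (A j i)^* - A i j - A j i)) / 2%:R.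
  by field.
by rewrite h2 add0r h1 mul0r.
Qed.

Lemma psd_conj_diag n (X M : 'M[C]_n) i : psdmx X ->
  0 <= (M *m X *m (M ^t*)%sesqui) i i.
Proof.
move=> /(_ (\col_k (M i k)^* )); rewrite -/(bf _ _ _) bfE.
have -> : (M *m X *m (M ^t*)%sesqui) i i = \sum_k \sum_l (M i k * X k l * (M i l)^* ).
  rewrite mxE exchange_big /=; apply: eq_bigr => l _; rewrite mxE big_distrl /=.
  by apply: eq_bigr => k _; rewrite !mxE.
congr (0 <= _); apply: eq_bigr => k _; apply: eq_bigr => l _; by rewrite !mxE conjCK.
Qed.

Lemma psd_herm_mx n (A : 'M[C]_n) : psdmx A -> (A ^t*)%sesqui = A.
Proof. by move=> PA; apply/matrixP => i j; rewrite !mxE psd_herm. Qed.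

Lemma psd_tr n (A B : 'M[C]_n) : psdmx A -> psdmx B -> 0 <= \tr (A *m B).
Proof.
move=> PA PB.
have NA : A \is normalmx by apply/normalmxP; rewrite psd_herm_mx.
set M := spectralmx A; set D := spectral_diag A.
have AE : A = (M ^t*)%sesqui *m diag_mx D *m M.
  by rewrite -invmx_unitary ?spectral_unitarymx //; apply/orthomx_spectralP.
have MU : M *m (M ^t*)%sesqui = 1%:M by apply/unitarymxP/spectral_unitarymx.
have DE : forall i, D 0 i = (M *m A *m (M ^t*)%sesqui) i i.
  move=> i; rewrite AE !mulmxA MU mul1mx -!mulmxA MU mulmx1 mxE eqxx mulr1n //.
have -> : \tr (A *m B) = \tr (diag_mx D *m (M *m B *m (M ^t*)%sesqui)).
  by rewrite AE -!mulmxA mxtrace_mulC !mulmxA.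
rewrite /mxtrace; apply: sumr_ge0 => i _; rewrite mul_diag_mx mxE.
by rewrite mulr_ge0 // ?DE psd_conj_diag.
Qed.

Lemma tele1 (b : nat -> C) m :
  \sum_(j < m) (j.+1%:R * (b j - b j.+1)) = \sum_(j < m) b j - m%:R * b m.
Proof.
elim: m => [|m IH]; first by rewrite !big_ord0 mul0r subr0.
rewrite !big_ord_recr /= IH -!natr1; ring.
Qed.

Lemma tele2 (b : nat -> C) m a : (a <= m)%N ->
  \sum_(j < m) (if (a <= j)%N then b j - b j.+1 else 0) = b a - b m.
Proof.
elim: m => [|m IH]; first by rewrite leqn0 => /eqP ->; rewrite big_ord0 subrr.
rewrite leq_eqVlt => /orP [/eqP ->|]; last first.
  by rewrite ltnS => h; rewrite big_ord_recr /= IH // h; ring.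
rewrite big1 ?subrr // => j _; have := ltn_ord j; rewrite ltnNge => /negbTE -> //.
Qed.

Lemma bf_tr n (A : 'M[C]_n) v : bf A v v = \tr (A *m (v *m adjv v)).
Proof. by rewrite mulmxA mxtrace_mulC trace_mx11 /bf mulmxA. Qed.

Lemma bf_conj n (u w : 'cV[C]_n) : (adjv w *m u) 0 0 = ((adjv u *m w) 0 0)^*.
Proof.
rewrite !mxE rmorph_sum; apply: eq_bigr => i _; rewrite !mxE rmorphM /= conjCK mulrC //.
Qed.

Lemma rank1_psd n (v : 'cV[C]_n) : psdmx (v *m adjv v).
Proof.
move=> w; rewrite mulmxA.
rewrite -mulmxA mxE big_ord1 bf_conj mulrC; exact: mul_conjC_ge0.
Qed.

Lemma bfZA n (A : 'M[C]_n) c v : bf (c *: A) v v = c * bf A v v.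
Proof. by rewrite /bf -scalemxAr -scalemxAl mxE. Qed.

Lemma block1 n (M : 'M[C]_n) : block_psd (fun (_ _ : 'I_1) => M) <-> psdmx M.
Proof.
split=> [h w|h v]; last by rewrite !big_ord1; apply: h.
by have := h (fun _ => w); rewrite !big_ord1.
Qed.

Lemma tr_delta n (M : 'M[C]_n) a b : \tr (M *m delta_mx b a) = M a b.
Proof.
rewrite /mxtrace (bigD1 a) //= big1 ?addr0.
  rewrite mxE (bigD1 b) //= big1 ?addr0; first by rewrite !mxE !eqxx mulr1.
  by move=> k kb; rewrite !mxE (negbTE kb) mulr0.
move=> i ia; rewrite mxE big1 // => k _; rewrite !mxE eq_sym (negbTE ia) andbF mulr0 //.
Qed.

Lemma tr_id n (M : 'M[C]_n) : (forall X, \tr (M *m X) = \tr X) -> M = 1%:M.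
Proof.
move=> h; apply/matrixP => a b; rewrite -tr_delta h -[delta_mx b a]mul1mx tr_delta //.
Qed.

End H.

Section M.
Variable C : numClosedFieldType.
Variable n : nat.
Variable P : 'M[C]_n.+1 -> 'M[C]_n.+1.
Hypothesis hL : linear P.

Lemma P0 : P 0 = 0.
Proof. have := hL 1 0 0; rewrite !scale1r addr0 => h. by have := subrr (P 0); rewrite {1}h addrK. Qed.
Lemma PD X Y : P (X + Y) = P X + P Y.
Proof. by have := hL 1 X Y; rewrite !scale1r. Qed.
Lemma PZ c X : P (c *: X) = c *: P X.
Proof. by have := hL c X 0; rewrite !addr0 P0 addr0. Qed.

Definition pp X k := if (k < n.+1)%N then P X (inord k) (inord k) else 0.
Definition ff j X := (j.+1)%:R * (pp X j - pp X j.+1).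
Definition EE j : 'M[C]_n.+1 := \matrix_(a,b) ff j (delta_mx b a).

Lemma ppD X Y k : pp (X + Y) k = pp X k + pp Y k.
Proof. by rewrite /pp; case: ifP => _; rewrite ?addr0 // PD mxE. Qed.
Lemma ppZ c X k : pp (c *: X) k = c * pp X k.
Proof. by rewrite /pp; case: ifP => _; rewrite ?mulr0 // PZ mxE. Qed.
Lemma ffD j X Y : ff j (X + Y) = ff j X + ff j Y.
Proof. rewrite /ff !ppD; ring. Qed.
Lemma ffZ j c X : ff j (c *: X) = c * ff j X.
Proof. rewrite /ff !ppZ; ring. Qed.
Lemma ff0 j : ff j 0 = 0.
Proof. by have := ffZ j 0 0; rewrite scale0r mul0r. Qed.

Lemma tr_EE j X : \tr (EE j *m X) = ff j X.
Proof.
rewrite {2}(matrix_sum_delta X).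
rewrite (big_morph (ff j) (ffD j) (ff0 j)).
under eq_bigr => i _ do rewrite (big_morph (ff j) (ffD j) (ff0 j)).
rewrite /mxtrace exchange_big /=; apply: eq_bigr => a _; rewrite mxE; apply: eq_bigr => b _.
by rewrite ffZ !mxE mulrC.
Qed.

Lemma pp_last X : pp X n.+1 = 0.
Proof. by rewrite /pp ltnn. Qed.
Lemma pp_ord X (i : 'I_n.+1) : pp X i = P X i i.
Proof. by rewrite /pp ltn_ord inord_val. Qed.

Lemma sumEE : trace_preserving P -> \sum_(j < n.+1) EE j = 1%:M.
Proof.
move=> hTP; apply: tr_id => X; rewrite mulmx_suml linear_sum /=.
under eq_bigr => j _ do rewrite tr_EE.
rewrite /ff tele1 pp_last mulr0 subr0 -hTP /mxtrace.
by apply: eq_bigr => i _; rewrite pp_ord.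
Qed.

Lemma reprE rho : (forall a b : 'I_n.+1, a != b -> P rho a b = 0) ->
  P rho = \sum_(j < n.+1) \tr (EE j *m rho) *: tau j.
Proof.
move=> hd; apply/matrixP => a b; rewrite summxE.
under eq_bigr => j _ do rewrite tr_EE !mxE.
case: (eqVneq a b) => [<-|ab]; last first.
  by rewrite hd // big1 // => j _; rewrite mulr0n !mulr0.
have -> : \sum_(j < n.+1) ff (nat_of_ord j) rho * ((j.+1%:R)^-1 * ((if (a <= j)%N then 1 else 0) *+ true))
   = \sum_(j < n.+1) (if (a <= j)%N then pp rho j - pp rho j.+1 else 0).
  apply: eq_bigr => j _; rewrite mulr1n /ff; case: ifP => _; rewrite ?mulr0 // mulr1.
  by rewrite mulrC mulrA mulVf ?mul1r // pnatr_eq0.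
by rewrite tele2 ?pp_last ?subr0 ?pp_ord // ltnW.
Qed.

Lemma ff_dens_ge0 (j : 'I_n.+1) rho : passive (P rho) -> 0 <= ff j rho.
Proof.
move=> [[psdP _] [p [Pe mono]]].
have Pd : forall i : 'I_n.+1, P rho i i = p i by move=> i; rewrite Pe !mxE eqxx mulr1n.
rewrite /ff mulr_ge0 ?ler0n // subr_ge0 pp_ord Pd /pp.
case: ifP => h.
  by have := mono j (inord j.+1); rewrite inordK // leqnSn Pd => /(_ isT).
by rewrite -Pd; apply: psd_diag.
Qed.

Lemma EE_psd (j : 'I_n.+1) : activity_breaking P -> psdmx (EE j).
Proof.
move=> hAB v; rewrite -/(bf _ _ _) bf_tr tr_EE.
set R := v *m adjv v.
have sE : \tr R = \sum_i v i 0 * (v i 0)^*.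
  rewrite /R mxtrace_mulC trace_mx11 mxE; apply: eq_bigr => i _; rewrite !mxE mulrC //.
have s0 : 0 <= \tr R by rewrite sE; apply: sumr_ge0 => i _; apply: mul_conjC_ge0.
case: (eqVneq (\tr R) 0) => [sz|snz].
  have v0 : v = 0.
    apply/matrixP => i k; rewrite ord1 mxE.
    have := sz; rewrite sE => /psumr_eq0P h.
    by apply/eqP; rewrite -mul_conjC_eq0; apply/eqP/h => // l _; apply: mul_conjC_ge0.
  by rewrite /R v0 mul0mx ff0.
have dens : density ((\tr R)^-1 *: R).
  split; last by rewrite mxtraceZ mulVf.
  by move=> w; rewrite -/(bf _ _ _) bfZA mulr_ge0 ?invr_ge0 //; apply: rank1_psd.
have -> : R = \tr R *: ((\tr R)^-1 *: R) by rewrite scalerA divff // scale1r.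
by rewrite ffZ mulr_ge0 // ff_dens_ge0 //; apply: hAB.
Qed.

End M.

Unset Implicit Arguments.

Theorem mainTheorem5 (C : numClosedFieldType) (d : nat) (P : 'M[C]_d -> 'M[C]_d) :
  (0 < d)%N -> quantum_channel P ->
  (activity_breaking P <->
   exists E : 'I_d -> 'M[C]_d,
     povm E /\
     forall rho : 'M[C]_d, density rho ->
       P rho = \sum_(j < d) \tr (E j *m rho) *: tau j).
Proof.
case: d P => [//|n] P _ [hL [hCP hTP]]; split.
  move=> hAB; exists (fun j : 'I_n.+1 => EE P j); split.
    split; first by move=> j; apply: EE_psd.
    exact: sumEE.
  move=> rho dens; apply: reprE => // a b ab.
  have [_ [p [-> _]]] := hAB rho dens.
  by rewrite !mxE (negbTE ab) mulr0n.
move=> [E [[Epsd _] hrep]] rho dens.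
have cge0 : forall j, 0 <= \tr (E j *m rho) by move=> j; apply: psd_tr => //; case: dens.
split.
  split; last by rewrite hTP; case: dens.
  apply/block1; apply: (hCP 1 (fun _ _ => rho)); apply/block1; by case: dens.
exists (fun i : 'I_n.+1 => \sum_(j < n.+1) \tr (E j *m rho) * ((j.+1%:R)^-1 * (if (i <= j)%N then 1 else 0))).
split.
  apply/matrixP => a b; rewrite hrep // summxE !mxE.
  case: (eqVneq a b) => [<-|ab].
    rewrite mulr1n; apply: eq_bigr => j _; rewrite !mxE eqxx mulr1n //.
  rewrite mulr0n big1 // => j _; rewrite !mxE (negbTE ab) mulr0n !mulr0 //.
move=> i j ij; apply: ler_sum => k _.
apply: ler_wpM2l => //; apply: ler_wpM2l; first by rewrite invr_ge0 ler0n.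
case: ifP => h1; case: ifP => h2 //.
by move: h2; rewrite (leq_trans ij h1).
Qed.
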